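(* $\mathit{HM}^\ell_1(X)$ is freely generated by the ordered pairs of distinct adjacent points of $X$ at distance $\ell$ apart. In particular, $\mathit{HM}_1(X)=0$ (in all gradings $\ell$) if and only if $X$ is Menger convex.
   Context: Let $X$ be a metric space. A point $y$ is strictly between $x$ and $z$ if $d(x,y)+d(y,z)=d(x,z)$ and $x\neq y\neq z$. Two points are non-adjacent if some point lies strictly between them, and adjacent otherwise; $X$ is Menger convex if any two distinct points are non-adjacent. The magnitude homology $\mathit{HM}^\ell_n(X)$ is the degree-$n$ homology of the chain complex whose $n$-chains in grading $\ell$ are the free abelian group on symbols $\langle x_0,\dots,x_n\rangle$ with $x_i\neq x_{i+1}$ and $d(x_0,x_1)+\cdots+d(x_{n-1},x_n)=\ell$, with boundary $\sum_i(-1)^i d^i$, where $d^i$ deletes $x_i$ if $d(x_{i-1},x_i)+d(x_i,x_{i+1})=d(x_{i-1},x_{i+1})$ and is $0$ otherwise (deleting an endpoint always gives $0$). *)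

(* Defs.v *)
From HB Require Import structures.
From mathcomp Require Import all_boot all_order all_algebra.
From mathcomp Require Import boolp reals.
Set Implicit Arguments. Unset Strict Implicit. Unset Printing Implicit Defensive.
Import Order.TTheory GRing.Theory Num.Theory.
Local Open Scope ring_scope.

(** Prop-valued list membership (no decidable equality needed) *)
Fixpoint inl {A : Type} (x : A) (s : seq A) : Prop :=
  match s with [::] => False | y :: s' => y = x \/ inl x s' end.

Section Magnitude.
Variables (R : realType) (T : Type) (d : T -> T -> R).

Definition is_metric : Prop :=
  [/\ forall x y, 0 <= d x y,
      forall x y, d x y = 0 <-> x = y,
      forall x y, d x y = d y x
    & forall x y z, d x z <= d x y + d y z].

Definition strictly_between (x y z : T) : Prop :=
  d x y + d y z = d x z /\ x <> y /\ y <> z.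
Definition nonadjacent (x z : T) : Prop := exists y, strictly_between x y z.
Definition adjacent (x z : T) : Prop := ~ nonadjacent x z.
Definition menger_convex : Prop := forall x z, x <> z -> nonadjacent x z.

(** tuples <x_0,...,x_n> are represented as lists of length n+1 *)
Fixpoint path_len (x : T) (s : seq T) : R :=
  match s with [::] => 0 | y :: s' => d x y + path_len y s' end.
Definition tlen (s : seq T) : R :=
  match s with [::] => 0 | x :: s' => path_len x s' end.

Fixpoint consec_distinct (x : T) (s : seq T) : Prop :=
  match s with [::] => True | y :: s' => x <> y /\ consec_distinct y s' end.
Definition nondeg (s : seq T) : Prop :=
  match s with [::] => True | x :: s' => consec_distinct x s' end.

Definition is_gen (n : nat) (l : R) (s : seq T) : Prop :=
  [/\ size s = n.+1, nondeg s & tlen s = l].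

(** a chain is a formal Z-linear combination of tuples, given as a list of
    (coefficient, tuple); two chains are equal when all coefficients agree *)
Definition chain := seq (int * seq T).

Definition in_grading (n : nat) (l : R) (c : chain) : Prop :=
  forall p, inl p c -> is_gen n l p.2.

Definition coef (c : chain) (u : seq T) : int :=
  \sum_(p <- c) (if `[< p.2 = u >] then p.1 else 0).

Definition ceq (c c' : chain) : Prop := forall u, coef c u = coef c' u.

(** boundary of a single generator: sum_i (-1)^i d^i, where d^i deletes the
    interior point x_i if it lies between x_{i-1} and x_{i+1} (else 0);
    endpoint deletions are 0 *)
Definition bd_gen (s : seq T) : chain :=
  match s with
  | [::] => [::]
  | x0 :: _ =>
    [seq (((-1) ^+ i : int), take i s ++ drop i.+1 s)
    | i <- [seq i <- iota 1 (size s - 2)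
           | `[< d (nth x0 s i.-1) (nth x0 s i) + d (nth x0 s i) (nth x0 s i.+1)
                 = d (nth x0 s i.-1) (nth x0 s i.+1) >]]]
  end.

Definition bd (c : chain) : chain :=
  flatten [seq [seq (p.1 * q.1, q.2) | q <- bd_gen p.2] | p <- c].

Definition is_cycle (n : nat) (l : R) (c : chain) : Prop :=
  in_grading n l c /\ ceq (bd c) [::].

Definition is_boundary (n : nat) (l : R) (c : chain) : Prop :=
  exists b, in_grading n.+1 l b /\ ceq c (bd b).

Definition pairs_chain (a : seq (int * (T * T))) : chain :=
  [seq (p.1, [:: p.2.1; p.2.2]) | p <- a].

Definition adj_pair (l : R) (p : T * T) : Prop :=
  [/\ p.1 <> p.2, adjacent p.1 p.2 & d p.1 p.2 = l].

(** HM^l_1(X) is freely generated by the classes of the adjacent distinct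
    pairs at distance l: they span ker d_1 / im d_2 and are independent. *)
Definition HM1_freely_generated (l : R) : Prop :=
  (forall c, is_cycle 1 l c ->
     exists a b, (forall p, inl p a -> adj_pair l p.2) /\
                 in_grading 2 l b /\ ceq c (pairs_chain a ++ bd b)) /\
  (forall a, (forall p, inl p a -> adj_pair l p.2) ->
     is_boundary 1 l (pairs_chain a) -> ceq (pairs_chain a) [::]).

Definition HM1_trivial (l : R) : Prop :=
  forall c, is_cycle 1 l c -> is_boundary 1 l c.

End Magnitude.

(* Main.v *)
Require Import Defs.
From mathcomp Require Import all_boot all_order all_algebra.
From mathcomp Require Import boolp reals.

Set Implicit Arguments. Unset Strict Implicit. Unset Printing Implicit Defensive.
Import Order.TTheory GRing.Theory Num.Theory.

Section Aux.
Local Open Scope ring_scope.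
Variables (R : realType) (T : Type) (d : T -> T -> R).

Lemma coef_nil (u : seq T) : coef [::] u = 0.
Proof. by rewrite /coef big_nil. Qed.

Lemma coef_cons (p : int * seq T) c u :
  coef (p :: c) u = (if `[< p.2 = u >] then p.1 else 0) + coef c u.
Proof. by rewrite /coef big_cons. Qed.

Lemma coef_cat (c1 c2 : chain T) u : coef (c1 ++ c2) u = coef c1 u + coef c2 u.
Proof. by rewrite /coef big_cat. Qed.

Lemma bd_cons (p : int * seq T) c :
  bd d (p :: c) = [seq (p.1 * q.1, q.2) | q <- bd_gen d p.2] ++ bd d c.
Proof. by []. Qed.

Lemma bd_gen3 x y z : bd_gen d [:: x; y; z] =
  if `[< d x y + d y z = d x z >] then [:: ((-1) ^+ 1, [:: x; z])] else [::].
Proof. by rewrite /bd_gen /=; case: ifP. Qed.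

Lemma bd_nonzero l b u : in_grading d 2 l b -> coef (bd d b) u <> 0 ->
  exists x z, u = [:: x; z] /\ nonadjacent d x z.
Proof.
elim: b => [|p b IH] Hb; first by rewrite coef_nil.
have [Hs Hnd Ht] := Hb p (or_introl erefl).
have Hb' : in_grading d 2 l b := fun q hq => Hb q (or_intror hq).
case: p Hs Hnd {Hb Ht} => k [|x [|y [|z [|w s]]]] // _ [Hxy [Hyz _]].
rewrite bd_cons bd_gen3 coef_cat.
case: (eqVneq (coef (bd d b) u) 0) => [-> | Hne _]; last by apply: IH => //; apply/eqP.
rewrite addr0.
case: (asboolP (d x y + d y z = d x z)) => Hb3 /=;
  last by rewrite coef_nil.
rewrite coef_cons coef_nil addr0 /=.
case: (asboolP ([:: x; z] = u)) => // <- _.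
by exists x, z; split => //; exists y.
Qed.

Lemma pairs_nonzero (a : seq (int * (T * T))) u :
  coef (pairs_chain a) u <> 0 -> exists p, inl p a /\ [:: p.2.1; p.2.2] = u.
Proof.
elim: a => [|p a IH] /=; first by rewrite coef_nil.
rewrite coef_cons /=.
case: (asboolP ([:: p.2.1; p.2.2] = u)) => [Hu _|_]; first by exists p; split; [left|].
rewrite add0r => /IH [q [Hq Hu]]; exists q; split => //; by right.
Qed.

Lemma span l c : in_grading d 1 l c ->
  exists a b, (forall p, inl p a -> adj_pair d l p.2) /\
              in_grading d 2 l b /\ ceq (pairs_chain a ++ bd d b) c.
Proof.
elim: c => [|p c IH] Hc.
  by exists [::], [::]; split => //; split.
have [Hs Hnd Ht] := Hc p (or_introl erefl).
have Hc' : in_grading d 1 l c := fun q hq => Hc q (or_intror hq).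
have [a [b [Ha [Hb Heq]]]] := IH Hc'.
case: p Hs Hnd Ht {Hc} => k [|x [|y [|z s]]] //= _ [Hxy _].
rewrite addr0 => Ht.
case: (pselect (adjacent d x y)) => Hadj.
  exists ((k, (x, y)) :: a), b; split.
    by move=> q [<-|hq]; [split|exact: Ha].
  split => // u /=; by rewrite !coef_cons Heq.
have [w [Hw1 [Hxw Hwy]]] : nonadjacent d x y by apply: contrapT.
exists a, ((-k, [:: x; w; y]) :: b); split => //; split.
  move=> q [<-|hq]; last exact: Hb.
  by split => //=; rewrite addr0 Hw1.
move=> u; rewrite bd_cons bd_gen3 (asboolT Hw1) /= coef_cat coef_cons coef_cons.
rewrite -(Heq u) coef_cat /= expr1 mulrN1 opprK.
by rewrite addrCA.
Qed.

End Aux.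

Theorem corollary7p6 (R : realType) (T : Type) (d : T -> T -> R) :
  is_metric d ->
  (forall l : R, HM1_freely_generated d l) /\
  ((forall l : R, HM1_trivial d l) <-> menger_convex d).
Proof.
move=> _; split.
  move=> l; split.
    move=> c [Hc _]; have [a [b [Ha [Hb Heq]]]] := span Hc.
    by exists a, b; split => //; split => // u; rewrite Heq.
  move=> a Ha [b [Hb Heq]] u; rewrite coef_nil.
  case: (eqVneq (coef (pairs_chain a) u) 0) => // Hne.
  have Hne' : coef (bd d b) u <> 0 by rewrite -Heq; apply/eqP.
  have [x [z [Hu Hna]]] := bd_nonzero Hb Hne'.
  have [p [Hp Hpu]] := pairs_nonzero (elimN eqP Hne).
  have [_ Hadj _] := Ha p Hp.
  by exfalso; apply: Hadj; rewrite Hu in Hpu; case: Hpu => -> ->.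
split.
  move=> Htriv x z Hxz.
  have Hc : is_cycle d 1 (d x z) [:: (1%R, [:: x; z])].
    split; last by [].
    by move=> q [<-|[]]; split => //=; rewrite addr0.
  have [b [Hb Heq]] := Htriv _ _ Hc.
  have := Heq [:: x; z].
  rewrite coef_cons (asboolT (erefl [:: x; z])) coef_nil GRing.addr0 => H.
  have Hn : coef (bd d b) [:: x; z] <> 0%R by rewrite -H.
  have [x' [z' [Hu Hna]]] := bd_nonzero Hb Hn.
  by case: Hu => -> ->.
move=> Hm l c [Hc _].
have [[|p a] [b [Ha [Hb Heq]]]] := span Hc.
  by exists b; split => // u; rewrite -Heq.
have [Hne Hadj _] := Ha p (or_introl erefl).
by exfalso; apply: Hadj; apply: Hm.
Qed.
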